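(* Let $n\ge1$, let $\preceq$ be an admissible order on $L([0,1])$ and let $F\colon L([0,1])^2\to L([0,1])$, $G\colon L([0,1])^n\to L([0,1])$. The interval-valued Sugeno-like $FG$-functional $\mathbf S_m^{F,G}$ is idempotent (i.e. $\mathbf S_m^{F,G}(X,\dots,X)=X$ for all $X\in L([0,1])$) for every IV fuzzy measure $m$ w.r.t. $\preceq$ whenever: (i) $F(X,\mathbf 1)=X$ for all $X\in L([0,1])$ and $G=\mathrm{Proj}_1$; or (ii) $F(X,\mathbf 1)=X$ for all $X\in L([0,1])$, $F$ is non-decreasing in the second variable and $G=\vee$; or (iii) $G$ is idempotent and $F(X,Y)=X$ for all $X,Y\in L([0,1])$.
   Context: $N=\{1,\dots,n\}$. $L([0,1])=\{[a,b]:0\le a\le b\le1\}$, $\mathbf0=[0,0]$, $\mathbf1=[1,1]$. An admissible order $\preceq$ is a total order on $L([0,1])$ such that $[a,b]\preceq[c,d]$ whenever $a\le c$ and $b\le d$. $\vee$ denotes the maximum w.r.t. $\preceq$; monotonicity is w.r.t. $\preceq$; $\mathrm{Proj}_1(X_1,\dots,X_n)=X_1$; $G$ idempotent means $G(X,\dots,X)=X$. An IV fuzzy measure w.r.t. $\preceq$ is $m\colon 2^N\to L([0,1])$ with $m(\emptyset)=\mathbf0$, $m(N)=\mathbf1$, $m(A)\preceq m(B)$ for $A\subseteq B$. For a permutation $\sigma$ of $N$, $E_{\sigma(i)}=\{\sigma(i),\dots,\sigma(n)\}$. The IV Sugeno-like $FG$-functional w.r.t. $m$ is $\mathbf S_m^{F,G}(X_1,\dots,X_n)=G\big(F(X_{\sigma(1)},m(E_{\sigma(1)})),\dots,F(X_{\sigma(n)},m(E_{\sigma(n)}))\big)$,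 where $\sigma$ is any permutation with $X_{\sigma(1)}\preceq\dots\preceq X_{\sigma(n)}$; it is defined when (Condition (WDS)) this value does not depend on the choice of such $\sigma$, for all inputs. *)

(* Defs.v *)
From mathcomp Require Import all_boot all_order all_algebra all_fingroup.
From mathcomp Require Import reals.
Set Implicit Arguments. Unset Strict Implicit. Unset Printing Implicit Defensive.
Import Order.TTheory GRing.Theory Num.Theory.
Local Open Scope ring_scope.

(* L([0,1]) : closed subintervals [a,b] of [0,1] *)
Record IV (R : realType) := mkIV {
  lo : R; hi : R;
  IV_prop : (0 <= lo) && (lo <= hi) && (hi <= 1) }.

Definition IV0 (R : realType) : IV R.
Proof. refine (@mkIV R 0 0 _). by rewrite lexx ler01. Defined.
Definition IV1 (R : realType) : IV R.
Proof. refine (@mkIV R 1 1 _). by rewrite lexx ler01. Defined.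

Definition admissible (R : realType) (le : IV R -> IV R -> bool) : Prop :=
  [/\ (forall x, le x x),
      (forall x y, le x y -> le y x -> x = y),
      (forall x y z, le x y -> le y z -> le x z),
      (forall x y, le x y || le y x) &
      (forall x y, lo x <= lo y -> hi x <= hi y -> le x y)].

Definition ivmax (R : realType) (le : IV R -> IV R -> bool) (x y : IV R) :=
  if le x y then y else x.

(* n-ary maximum w.r.t. le (IV0 is the least element of any admissible order) *)
Definition ivsup (R : realType) (le : IV R -> IV R -> bool) (n : nat)
  (X : 'I_n -> IV R) : IV R :=
  foldr (fun i acc => ivmax le (X i) acc) (IV0 R) (enum 'I_n).

Definition IV_fuzzy_measure (R : realType) (le : IV R -> IV R -> bool) (n : nat)
  (m : {set 'I_n} -> IV R) : Prop :=
  [/\ m set0 = IV0 R, m setT = IV1 R &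
      (forall A B : {set 'I_n}, A \subset B -> le (m A) (m B))].

Definition Eset (n : nat) (s : 'S_n) (i : 'I_n) : {set 'I_n} :=
  [set s j | j in [pred j : 'I_n | (i <= j)%N]].

Definition sorting_perm (R : realType) (le : IV R -> IV R -> bool) (n : nat)
  (X : 'I_n -> IV R) (s : 'S_n) : Prop :=
  forall i j : 'I_n, (i <= j)%N -> le (X (s i)) (X (s j)).

Definition SugenoFG (R : realType) (n : nat)
  (F : IV R -> IV R -> IV R) (G : ('I_n -> IV R) -> IV R)
  (m : {set 'I_n} -> IV R) (s : 'S_n) (X : 'I_n -> IV R) : IV R :=
  G (fun i => F (X (s i)) (m (Eset s i))).

(* Main.v *)
Require Import Defs.
From mathcomp Require Import all_boot all_order all_algebra all_fingroup.
From mathcomp Require Import reals.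
From Stdlib Require Import FunctionalExtensionality.
Import Order.TTheory GRing.Theory Num.Theory.
Local Open Scope ring_scope.

Lemma fold_max (R : realType) (le : IV R -> IV R -> bool) (Hadm : admissible le)
  (n : nat) (Y : 'I_n -> IV R) (X : IV R) (l : seq 'I_n) :
  le (IV0 R) X -> (forall i, le (Y i) X) ->
  le (foldr (fun i acc => ivmax le (Y i) acc) (IV0 R) l) X /\
  ((exists2 i, i \in l & Y i = X) ->
     foldr (fun i acc => ivmax le (Y i) acc) (IV0 R) l = X).
Proof.
case: Hadm => refl anti trans tot mono H0 HY.
elim: l => [|a l [IH1 IH2]] /=.
  by split => // -[i].
rewrite /ivmax; split; first by case: ifP.
move=> [i]; rewrite inE => /orP [/eqP -> | il] YX.
  rewrite YX; case: ifP => // h; exact: anti.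
rewrite IH2; last by exists i.
by rewrite HY.
Qed.

Theorem proposition3 (R : realType) (n : nat) (hn : (0 < n)%N)
  (le : IV R -> IV R -> bool) (Hadm : admissible le)
  (F : IV R -> IV R -> IV R) (G : ('I_n -> IV R) -> IV R) :
  [\/ (forall X, F X (IV1 R) = X) /\ (forall Xs, G Xs = Xs (Ordinal hn)),
      [/\ (forall X, F X (IV1 R) = X),
          (forall X Y Y', le Y Y' -> le (F X Y) (F X Y')) &
          (forall Xs, G Xs = ivsup le Xs)]
    | (forall X, G (fun _ => X) = X) /\ (forall X Y, F X Y = X)] ->
  forall m : {set 'I_n} -> IV R, IV_fuzzy_measure le m ->
  forall (X : IV R) (s : 'S_n),
    sorting_perm le (fun _ => X) s ->
    SugenoFG F G m s (fun _ => X) = X.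
Proof.
have E0 : forall s : 'S_n, Eset s (Ordinal hn) = setT.
  move=> s; apply/setP => x; rewrite in_setT.
  apply/imsetP; exists (s^-1%g x); first by rewrite inE.
  by rewrite permKV.
move=> [[HF HG]|[HF Hmono HG]|[HG HF]] m [m0 m1 mmono] X s _; rewrite /SugenoFG.
- by rewrite HG E0 m1 HF.
- rewrite HG /ivsup.
  have Hadm' := Hadm; case: Hadm' => refl anti trans tot cmp.
  have := (@fold_max R le Hadm n (fun i => F X (m (Eset s i))) X (enum 'I_n)).
  case.
  + apply: cmp; case: X => a b /= /andP [/andP [h1 h2] h3] => //=.
    by apply: le_trans h2.
  + move=> i; rewrite -{2}(HF X); apply: Hmono; rewrite -m1; apply: mmono.
    exact: subsetT.
  + move=> _ ->//; exists (Ordinal hn); first by rewrite mem_enum.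
    by rewrite E0 m1 HF.
- have -> : (fun i => F X (m (Eset s i))) = (fun _ => X).
    by apply: functional_extensionality => i; rewrite HF.
  by rewrite HG.
Qed.
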